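(* For every $n\ge 1$, $|\mathcal{OCT}_n|=(n+1)2^{n-2}$.
   Context: $X_n=\{1,2,\dots,n\}$ with its usual order. A map $\alpha:X_n\to X_n$ is order-preserving if $x\le y$ implies $x\alpha\le y\alpha$, and a contraction if $|x\alpha-y\alpha|\le|x-y|$ for all $x,y$. $\mathcal{OCT}_n$ is the set (semigroup under composition) of all order-preserving contractions $X_n\to X_n$ defined on all of $X_n$. *)

(* Defs.v *)
From mathcomp Require Import all_boot.
Set Implicit Arguments. Unset Strict Implicit. Unset Printing Implicit Defensive.

(* X_n = {1,...,n} is modelled by 'I_n = {0,...,n-1} (shift by one, which
   preserves order and distances). Full transformations X_n -> X_n are
   finite functions {ffun 'I_n -> 'I_n}. *)

Definition order_preserving n (a : {ffun 'I_n -> 'I_n}) : bool :=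
  [forall x : 'I_n, forall y : 'I_n, (x <= y) ==> (a x <= a y)].

Definition natdist (m k : nat) : nat := (m - k) + (k - m).

Definition contraction n (a : {ffun 'I_n -> 'I_n}) : bool :=
  [forall x : 'I_n, forall y : 'I_n, natdist (a x) (a y) <= natdist x y].

Definition OCT n : {set {ffun 'I_n -> 'I_n}} :=
  [set a | order_preserving a && contraction a].

(* Main.v *)
Require Import Defs.
From mathcomp Require Import all_boot zify.
Set Implicit Arguments. Unset Strict Implicit. Unset Printing Implicit Defensive.

Definition enc m (a : {ffun 'I_m.+1 -> 'I_m.+1}) : seq nat :=
  mkseq (fun i => val (a (inord i))) m.+1.

Definition stair (s : seq nat) : bool :=
  all (fun i => (nth 0 s i.+1 == nth 0 s i) || (nth 0 s i.+1 == (nth 0 s i).+1))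
      (iota 0 (size s).-1).

Lemma octE m (a : {ffun 'I_m.+1 -> 'I_m.+1}) : (a \in OCT m.+1) = stair (enc a).
Proof.
set g := fun i => val (a (inord i)).
have gE : forall x : 'I_m.+1, nat_of_ord (a x) = g x by move=> x; rewrite /g inord_val.
rewrite /stair size_mkseq -pred_Sn -/(enc a).
have Hn : forall i, i < m -> nth 0 (enc a) i.+1 = g i.+1 /\ nth 0 (enc a) i = g i.
  by move=> i Hi; rewrite !nth_mkseq //; lia.
apply/idP/allP.
- rewrite inE => /andP [/forallP Hop /forallP Hc] i.
  rewrite mem_iota => /andP [_ Hi].
  have [-> ->] := Hn i Hi.
  have := Hop (inord i) => /forallP /(_ (inord i.+1)) /implyP.
  have := Hc (inord i) => /forallP /(_ (inord i.+1)).
  rewrite /natdist !inordK; try lia.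
  rewrite /g. move=> H1 H2. have {}H2 := H2 (leqnSn i).
  move: H1 H2; case: (a (inord i)) => u Hu; case: (a (inord i.+1)) => v Hv /= H1 H2; apply/orP; lia.
- move=> H.
  have H' : forall i, i < m -> g i <= g i.+1 <= (g i).+1.
    move=> i Hi. have Hi' : i \in iota 0 m by rewrite mem_iota; lia.
    have := H i Hi'.
    have [-> ->] := Hn i Hi. move=> /orP [/eqP ->|/eqP ->]; lia.
  have Hd : forall d x, x + d <= m -> g x <= g (x + d) <= g x + d.
    elim=> [|d IH] x Hx; first by rewrite !addn0 leqnn.
    have := IH x (ltac:(lia)). have := H' (x + d) (ltac:(lia)). rewrite addnS. lia.
  have Hxy : forall x y : 'I_m.+1, x <= y -> nat_of_ord (a x) <= nat_of_ord (a y) <= nat_of_ord (a x) + (y - x).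
    move=> x y Hxy. rewrite !gE. have := Hd (y - x) x.
    have -> : x + (y - x) = y by lia.
    move=> /(_ _) H0. apply: H0. have := ltn_ord y. lia.
  rewrite inE; apply/andP; split; apply/forallP => x; apply/forallP => y.
    by apply/implyP => /Hxy; lia.
  rewrite /natdist. case: (leqP x y) => Hle.
    have := Hxy _ _ Hle. lia.
  have := Hxy _ _ (ltnW Hle). lia.
Qed.

Fixpoint e (k r : nat) : nat :=
  match k with 0 => nat_of_bool (0 < r) | k'.+1 => e k' r + e k' r.-1 end.

Lemma e0 k : e k 0 = 0.
Proof. by elim: k => //= k ->. Qed.

Lemma e_big k r : k < r -> e k r = 2 ^ k.
Proof.
elim: k r => [|k IH] r H /=; first by case: r H.
rewrite !IH; [by rewrite expnS; lia| lia | lia].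
Qed.

Fixpoint S (k r : nat) : nat := match r with 0 => 0 | r'.+1 => S k r' + e k r' end.

Lemma S_rec k r : S k.+1 r.+1 = S k r.+1 + S k r.
Proof.
elim: r => [|r IH]; first by rewrite /= e0.
have -> : S k.+1 r.+2 = S k.+1 r.+1 + e k.+1 r.+1 by [].
rewrite IH /=. lia.
Qed.

Lemma S_formula k : 4 * S k k.+2 = (k + 2) * 2 ^ (k + 1).
Proof.
elim: k => [|k IH]; first by [].
rewrite S_rec.
have -> : S k k.+3 = S k k.+2 + e k k.+2 by [].
rewrite (@e_big k k.+2) //.
rewrite !addn1 !expnS in IH *. nia.
Qed.

Lemma sum_rev (f : nat -> nat) m :
  sumn [seq f (m - x) | x <- iota 0 m] = sumn [seq f i | i <- iota 1 m].
Proof.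
elim: m => [|m IH] //.
have -> : iota 1 m.+1 = iota 1 m ++ [:: m.+1].
  by rewrite -(addn1 m) iotaD addnC.
have -> : iota 0 m.+1 = 0 :: iota 1 m by [].
rewrite map_cat sumn_cat /= subn0 addn0 -IH (iotaDl 1 0) -map_comp addnC.
congr (_ + _); apply: congr1; apply: eq_map => x /=.
Qed.

Lemma S_sum k m : S k m.+1 = sumn [seq e k i | i <- iota 1 m].
Proof.
elim: m => [|m IH]; first by rewrite /= e0.
have -> : S k m.+2 = S k m.+1 + e k m.+1 by [].
have -> : iota 1 m.+1 = iota 1 m ++ [:: m.+1] by rewrite -(addn1 m) iotaD addnC.
rewrite IH map_cat sumn_cat /=. lia.
Qed.

Fixpoint W (k a m : nat) : seq (seq nat) :=
  match k with 0 => [:: [::]]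
  | k'.+1 => map (cons a) (W k' a m) ++
             (if a.+1 < m then map (cons a.+1) (W k' a.+1 m) else [::]) end.

Fixpoint stepok (a : nat) (t : seq nat) : bool :=
  match t with [::] => true
  | b :: t' => ((b == a) || (b == a.+1)) && stepok b t' end.

Lemma mem_cons_map (a b : nat) t (L : seq (seq nat)) :
  (b :: t \in map (cons a) L) = (b == a) && (t \in L).
Proof.
apply/mapP/andP => [[u Hu [-> ->]] //| [/eqP -> Ht]]; by exists t.
Qed.

Lemma nil_map (a : nat) (L : seq (seq nat)) : ([::] \in map (cons a) L) = false.
Proof. by apply/mapP => [[u _]]. Qed.

Lemma memW k a m t : a < m ->
  (t \in W k a m) = [&& size t == k, stepok a t & all (fun b => b < m) t].
Proof.
elim: k a t => [|k IH] a t Ham /=.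
  by case: t.
case: t => [|b t] /=.
  rewrite mem_cat nil_map /=; by case: ifP => //= _; rewrite nil_map.
rewrite mem_cat mem_cons_map eqSS.
have nS : (a == a.+1) = false by elim: a {Ham IH}.
have nS' : (a.+1 == a) = false by rewrite eq_sym.
case: (ltnP a.+1 m) => H1.
  rewrite mem_cons_map !IH //.
  case: (eqVneq b a) => [->|Hba].
    by rewrite nS Ham /= orbF.
  case: (eqVneq b a.+1) => [->|Hb2]; last by rewrite /= !andbF.
  by rewrite H1 /=.
rewrite orbF IH //.
case: (eqVneq b a) => [->|Hba].
  by rewrite Ham /=.
case: (eqVneq b a.+1) => [Eb|Hb2]; last by rewrite /= andbF.
by rewrite Eb ltnNge H1 /= !andbF.
Qed.

Lemma uniqW k a m : uniq (W k a m).
Proof.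
elim: k a => [|k IH] a //=.
have cinj : forall x : nat, injective (cons x) by move=> x u v [].
rewrite cat_uniq map_inj_uniq // IH /=.
case: ifP => _ //=; rewrite map_inj_uniq // IH andbT.
apply/hasP => [[s /mapP [u _ ->]]]. rewrite mem_cons_map.
have -> : (a.+1 == a) = false by elim: a {IH}.
by [].
Qed.

Lemma sizeW k a m : a < m -> size (W k a m) = e k (m - a).
Proof.
elim: k a => [|k IH] a Ham /=; first by rewrite subn_gt0 Ham.
rewrite size_cat size_map IH //. case: ifP => H.
  by rewrite size_map IH // subnS.
have -> : m - a = 1 by lia.
by rewrite /= e0.
Qed.

Definition L n := flatten [seq map (cons x) (W n.-1 x n) | x <- iota 0 n].

Lemma uniq_flat (f : nat -> seq (seq nat)) xs : uniq xs -> (forall x, uniq (f x)) ->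
  uniq (flatten [seq map (cons x) (f x) | x <- xs]).
Proof.
have cinj : forall x : nat, injective (cons x) by move=> x u v [].
elim: xs => [|x xs IH] //= /andP [Hx Hxs] Hf.
rewrite cat_uniq map_inj_uniq // Hf IH // andbT /=.
apply/hasP => [[s /flattenP [l /mapP [y Hy ->]] /mapP [u _ ->]]].
rewrite mem_cons_map => /andP [/eqP Eyx _]. by rewrite -Eyx Hy in Hx.
Qed.

Lemma uniqL n : uniq (L n).
Proof. apply: uniq_flat => //; [apply: iota_uniq | move=> x; apply: uniqW]. Qed.

Lemma memL n s : (s \in L n) =
  if s is x :: t then (x < n) && (t \in W n.-1 x n) else false.
Proof.
apply/flattenP/idP.
  move=> [l /mapP [y Hy ->]]. case: s => [|x t]; first by rewrite nil_map.
  rewrite mem_cons_map => /andP [/eqP -> ->]. by rewrite mem_iota in Hy; rewrite andbT.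
case: s => [|x t] //= /andP [Hx Ht].
exists (map (cons x) (W n.-1 x n)); last by rewrite mem_cons_map eqxx.
by apply/mapP; exists x; rewrite // mem_iota.
Qed.

Lemma sizeL n : size (L n) = sumn [seq e n.-1 (n - x) | x <- iota 0 n].
Proof.
rewrite /L size_flatten /shape -map_comp.
congr sumn. apply/eq_in_map => x. rewrite mem_iota /= => Hx.
by rewrite size_map sizeW.
Qed.

Lemma stepok_stair a t : stepok a t = stair (a :: t).
Proof.
elim: t a => [|b t IH] a //.
rewrite /stair /=. rewrite (iotaDl 1 0) all_map IH /stair /=.
by [].
Qed.

Lemma memL' n s : (s \in L n) = [&& size s == n, 0 < n, all (fun b => b < n) s & stair s].
Proof.
rewrite memL. case: s => [|x t] /=; first by case: n.
case: (ltnP x n) => Hx /=.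
  rewrite memW // -stepok_stair.
  case: n Hx => // n' Hx /=. rewrite eqSS.
  by case: (size t == n'); case: (stepok x t); case: (all _ t).
by rewrite !andbF.
Qed.

Theorem corollary2p10 (n : nat) (hn : 1 <= n) :
  4 * #|OCT n| = (n + 1) * 2 ^ n.
Proof.
case: n hn => [//|m] _.
have inj : injective (@enc m).
  move=> a b E. apply/ffunP => x. apply: val_inj.
  have := congr1 (nth 0 ^~ x) E. rewrite /enc !nth_mkseq //= inord_val. by [].
have P : perm_eq (map (@enc m) (enum (OCT m.+1))) (L m.+1).
  apply: uniq_perm; first by rewrite map_inj_uniq // enum_uniq.
    exact: uniqL.
  move=> s. apply/mapP/idP.
    move=> [a Ha ->]. rewrite mem_enum octE in Ha.
    rewrite memL'; apply/and4P; split => //; first by rewrite size_mkseq.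
    apply/allP => y /mapP [i _ ->]. exact: ltn_ord.
  rewrite memL' => /and4P [/eqP Hs _ /allP Hall Hst].
  set a := [ffun i : 'I_m.+1 => (inord (nth 0 s i) : 'I_m.+1)].
  have Es : enc a = s.
    apply: (@eq_from_nth _ 0); first by rewrite size_mkseq Hs.
    move=> i; rewrite size_mkseq => Hi.
    rewrite nth_mkseq // ffunE /= inordK // inordK //.
    apply: Hall. apply: mem_nth. by rewrite Hs.
  exists a => //. by rewrite mem_enum octE Es.
rewrite cardE -(size_map (@enc m)) (perm_size P) sizeL (sum_rev (e m)) -S_sum S_formula.
have -> : m.+1 + 1 = m + 2 by lia.
by rewrite addn1.
Qed.
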